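(* Let $m>2$ be an odd integer, $n\ge 1$ an integer, and let $M_{2mn}=\langle a,b : a^m=b^{2n}=1,\ bab^{-1}=a^{-1}\rangle$ be the metacyclic group of order $2mn$. Let $\Gamma_{M_{2mn}}$ be its non-commuting graph. Let $t_1,t_2$ be the two roots of the equation $(m-1)x^2-(2m-5)x-m=0$. Then the spectrum of the distance signless Laplacian matrix $D^Q(\Gamma_{M_{2mn}})$ (eigenvalues counted with multiplicity, multiplicities being added if two of the listed values coincide) consists of: (a) $2mn-4$ with multiplicity $m(n-1)$; (b) $(2m+1)n-4$ with multiplicity $m-1$; (c) $(3m-2)n-4$ with multiplicity $(m-1)n-1$; (d) $nt_k(m-1)+(3mn+n-4)$ with multiplicity $1$, for each $k=1,2$.
   Context: For a finite non-abelian group $G$ with centre $Z(G)$, the non-commuting graph $\Gamma_G$ is the simple undirected graph with vertex set $G\setminus Z(G)$, in which two distinct vertices $u,v$ are adjacent if and only if $uv\ne vu$. For a connected graph $H$, $d_{uv}$ denotes the length of a shortest path between $u$ and $v$; the distance matrix $D(H)$ has $(u,v)$-entry $d_{uv}$. The transmission of a vertex $v$ is $\sum_{u} d_{uv}$, and $Tr(H)$ is the diagonal matrix of vertex transmissions. The distance signless Laplacian matrix is $D^Q(H)=Tr(H)+D(H)$. *)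

(* Defs.v *)
From HB Require Import structures.
From mathcomp Require Import all_boot all_order all_algebra all_fingroup.
From mathcomp Require Import center.
Set Implicit Arguments. Unset Strict Implicit. Unset Printing Implicit Defensive.
Import GRing.Theory Num.Theory.

Section NCG.
Variables (gT : finGroupType) (G : {group gT}).

Definition ncg_vertex := {x : gT | x \in G :\: 'Z(G)%g}.

Definition ncg_adj (u v : ncg_vertex) : bool :=
  (u != v) && (val u * val v != val v * val u)%g.

Fixpoint ncg_walk (k : nat) (u v : ncg_vertex) : bool :=
  if k is k'.+1 then [exists w, ncg_adj u w && ncg_walk k' w v] else u == v.

(* d_uv = length of a shortest path (= shortest walk) from u to v
   (for a connected graph some such length is < #|V|) *)
Definition ncg_dist (u v : ncg_vertex) : nat :=
  find (fun k => ncg_walk k u v) (iota 0 #|{: ncg_vertex}|).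

Definition ncg_trans (v : ncg_vertex) : nat := \sum_(u : ncg_vertex) ncg_dist u v.

Local Open Scope ring_scope.
Definition ncg_DQ (R : nzRingType) : 'M[R]_#|{: ncg_vertex}| :=
  \matrix_(i, j)
    ((i == j)%:R * (ncg_trans (enum_val i))%:R + (ncg_dist (enum_val i) (enum_val j))%:R).

End NCG.

(* Main.v *)
Require Import Defs.
From HB Require Import structures.
From mathcomp Require Import all_boot all_order all_algebra all_fingroup.
From mathcomp Require Import center cyclic.
From mathcomp Require Import ring lra zify.
Import GRing.Theory Num.Theory.
Local Open Scope ring_scope.

Lemma det_diag1 (R : comNzRingType) N (B : 'M[R]_N) (p q : 'I_N) :
  p != q -> (forall i j, i != j -> (i != p) || (j != q) -> B i j = 0) ->
  \det B = \prod_i B i i.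
Proof.
move=> npq B0; rewrite /determinant (bigD1 1%g) //= odd_perm1 expr0 mul1r.
rewrite [X in _ + X]big1 ?addr0; first by apply: eq_bigr => i _; rewrite perm1.
move=> s ns1.
have [i /andP [sii Hi]] : exists i, (s i != i) && ((i != p) || (s i != q)).
  have [i si] : exists i, s i != i.
    apply/existsP; apply: contraNT ns1 => /existsPn H.
    by apply/eqP/permP => i; rewrite perm1; apply/eqP/negPn/H.
  case Hi: ((i != p) || (s i != q)); first by exists i; rewrite si.
  move/negbT: Hi; rewrite negb_or !negbK => /andP [/eqP ip /eqP siq].
  have npq' : q != p by rewrite eq_sym.
  exists q; rewrite npq' /= andbT.
  apply: contra npq => /eqP sq; apply/eqP; apply: (@perm_inj _ s).
  by rewrite sq -ip siq.
rewrite (bigD1 i) //= B0 ?mul0r ?mulr0 //; by rewrite eq_sym.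
Qed.

Lemma char_poly_sim (F : fieldType) N (A P T : 'M[F]_N) :
  A *m P = P *m T -> \det P != 0 -> char_poly A = char_poly T.
Proof.
move=> APT dP.
have key: char_poly_mx A *m map_mx polyC P = map_mx polyC P *m char_poly_mx T.
  by rewrite /char_poly_mx mulmxBl mulmxBr -!map_mxM APT scalar_mxC.
move/(congr1 determinant): key; rewrite !det_mulmx det_map_mx [X in X = _]mulrC.
by move/mulfI; apply; rewrite polyC_eq0.
Qed.

Section Abs.
Variables (R : rcfType) (V : finType) (m n : nat) (i0 : 'I_m).
Variables (key : V -> option 'I_m) (rep : option 'I_m -> V).
Hypothesis keyK : forall k, key (rep k) = k.
Definition cnt (k : option 'I_m) : nat := if k is Some _ then n else ((m-1)*n)%N.
Hypothesis hcnt : forall k, #|[pred v | key v == k]| = cnt k.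

Lemma sum_opt (F : option 'I_m -> R) : \sum_k F k = F None + \sum_i F (Some i).
Proof.
rewrite (bigD1 None) //=; congr (_ + _).
rewrite (reindex_onto Some (odflt i0)) /=; last by move=> [j|].
by apply: eq_bigl => i /=; rewrite eqxx.
Qed.

Lemma sum_const_pred (P : pred V) (c : R) : \sum_(z | P z) c = #|P|%:R * c.
Proof. by rewrite sumr_const mulr_natl. Qed.

Lemma sum_keyk k (F : option 'I_m -> R) :
  \sum_(z | key z == k) F (key z) = (cnt k)%:R * F k.
Proof.
rewrite (eq_bigr (fun _ => F k)); last by move=> z /eqP ->.
by rewrite sum_const_pred -hcnt.
Qed.

Lemma sum_key (F : option 'I_m -> R) :
  \sum_z F (key z) = \sum_k (cnt k)%:R * F k.
Proof.
rewrite (partition_big key predT) //=; apply: eq_bigr => k _.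
exact: sum_keyk.
Qed.

Lemma sum_ind (I : finType) (i : I) (a : I -> R) : \sum_j (j == i)%:R * a j = a i.
Proof.
by rewrite (bigD1 i) //= eqxx mul1r big1 ?addr0 // => j /negbTE ->; rewrite mul0r.
Qed.

Lemma sum_eqP (P : pred V) y : \sum_(z | P z) (z == y)%:R = (P y)%:R :> R.
Proof.
rewrite big_mkcond /= (bigD1 y) //= eqxx big1 ?addr0; first by case: (P y).
by move=> z /negbTE ->; case: (P z).
Qed.

Lemma sum_eq (y : V) : \sum_z (z == y)%:R = 1 :> R.
Proof. by rewrite (sum_eqP predT). Qed.


Hypotheses (m2 : (2 < m)%N) (n1 : (1 <= n)%N).
Variables t1 t2 : R.
Hypothesis hq1 : (m%:R - 1) * t1 ^+ 2 - (2 * m%:R - 5) * t1 - m%:R = 0 :> R.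
Hypothesis hsum : (m%:R - 1) * (t1 + t2) = 2 * m%:R - 5 :> R.

Definition dn (u v : V) : nat := if u == v then 0%N else if key u == key v then 2%N else 1%N.
Definition trn (v : V) : nat := (\sum_u dn u v)%N.

Lemma dnC u v : dn u v = dn v u.
Proof. by rewrite /dn eq_sym [key v == _]eq_sym. Qed.

Lemma sum_dn x (g : V -> R) :
  \sum_z (dn x z)%:R * g z = \sum_z g z + \sum_(z | key z == key x) g z - 2 * g x.
Proof.
rewrite (bigD1 x) //= [X in _ = X + _ - _](bigD1 x) //= [X in _ = _ + X - _](bigD1 x) //=.
rewrite /dn eqxx mul0r add0r.
have E: \sum_(z | (key z == key x) && (z != x)) g z =
        \sum_(z | z != x) (key z == key x)%:R * g z.
  rewrite big_mkcond [RHS]big_mkcond; apply: eq_bigr => z _.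
  by case: (z == x); case: (key z == key x); rewrite /= ?mul1r ?mul0r.
rewrite E.
have -> : \sum_(z | z != x) (if x == z then 0%N else if key x == key z then 2%N else 1%N)%:R * g z
   = \sum_(z | z != x) g z + \sum_(z | z != x) (key z == key x)%:R * g z.
  rewrite -big_split; apply: eq_bigr => z zx /=.
  rewrite eq_sym (negbTE zx) [key x == _]eq_sym.
  by case: (key z == key x); rewrite /= ?mul1r ?mul0r ?addr0 // mulr2n mulrDl mul1r.
lra.
Qed.

Lemma cntR k : (cnt k)%:R = (if k is Some _ then n%:R else (m%:R - 1) * n%:R) :> R.
Proof. by case: k => [i|] //=; rewrite natrM natrB //; apply: ltnW; apply: ltnW. Qed.

Lemma cardVR : (#|V|)%:R = (2 * m%:R - 1) * n%:R :> R.
Proof.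
have := sum_key (fun _ => 1); rewrite (sum_const_pred predT) mulr1 => ->.
rewrite sum_opt cntR (eq_bigr (fun _ => n%:R)); last by move=> i _; rewrite cntR mulr1.
by rewrite sumr_const card_ord mulr1 -mulr_natl; ring.
Qed.

Lemma trR x : (trn x)%:R = (2 * m%:R - 1) * n%:R + (cnt (key x))%:R - 2 :> R.
Proof.
rewrite /trn natr_sum (eq_bigr (fun u => (dn x u)%:R * 1)); last by move=> u _; rewrite dnC mulr1.
rewrite sum_dn (sum_const_pred predT) mulr1.
have := sum_keyk (key x) (fun _ => 1); rewrite /= => ->.
rewrite mulr1 cardVR.
lra.
Qed.


Definition Mr : R := m%:R.
Definition Nr : R := n%:R.
Definition Af (x y : V) : R := (x == y)%:R * (trn x)%:R + (dn x y)%:R.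
Definition colF (k k' : option 'I_m) : R :=
  match k with
  | None => if k' is None then t1 else 1
  | Some i => if i == i0 then (k' == None)%:R
              else (k' == Some i)%:R - (k' == Some i0)%:R
  end.
Definition isrep (y : V) := y == rep (key y).
Definition Pf (z y : V) : R :=
  if isrep y then colF (key y) (key z) else (z == y)%:R - (z == rep (key y))%:R.
Definition rb := rep None.
Definition r0 := rep (Some i0).
Definition l1 : R := Nr * t1 * (Mr - 1) + (3 * Mr * Nr + Nr - 4).
Definition l2 : R := Nr * t2 * (Mr - 1) + (3 * Mr * Nr + Nr - 4).
Definition lS : R := (2 * Mr + 1) * Nr - 4.
Definition dS : R := 2 * Mr * Nr - 4.
Definition dB : R := (3 * Mr - 2) * Nr - 4.
Definition lam (y : V) : R :=
  if isrep y then (match key y with None => l1 | Some i => if i == i0 then l2 else lS end)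
  else (if key y is Some _ then dS else dB).
Definition Tf (z y : V) : R :=
  if z == y then lam y else if (z == rb) && (y == r0) then (Mr - 1) * Nr else 0.

Lemma rb_r0 : rb != r0.
Proof. by apply/eqP => /(congr1 key); rewrite !keyK. Qed.

Lemma isrep_rep k : isrep (rep k).
Proof. by rewrite /isrep keyK. Qed.

Lemma sumPT x y : \sum_z Pf x z * Tf z y =
   Pf x y * lam y + (if y == r0 then Pf x rb * ((Mr - 1) * Nr) else 0).
Proof.
rewrite (bigD1 y) //= /Tf eqxx; congr (_ + _).
case: eqP => [-> | ny].
  rewrite (bigD1 rb) /=; last by rewrite rb_r0.
  rewrite (negbTE rb_r0) !eqxx /= big1 ?addr0 // => z /andP [zr zb].
  by rewrite (negbTE zr) (negbTE zb) mulr0.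
apply: big1 => z zy; rewrite (negbTE zy).
by rewrite andbF mulr0.
Qed.

Lemma sumAP x y : \sum_z Af x z * Pf z y =
  ((trn x)%:R - 2) * Pf x y + \sum_z Pf z y + \sum_(z | key z == key x) Pf z y.
Proof.
rewrite /Af (eq_bigr (fun z => (z == x)%:R * ((trn x)%:R * Pf z y) + (dn x z)%:R * Pf z y)).
  by rewrite big_split /= sum_ind sum_dn; lra.
by move=> z _; rewrite mulrDl mulrA eq_sym.
Qed.


Lemma Pf_rep z k : Pf z (rep k) = colF k (key z).
Proof. by rewrite /Pf isrep_rep keyK. Qed.

Lemma Pf_nrep z y : ~~ isrep y -> Pf z y = (z == y)%:R - (z == rep (key y))%:R.
Proof. by rewrite /Pf => /negbTE ->. Qed.

Lemma lam_rep k : lam (rep k) =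
  match k with None => l1 | Some i => if i == i0 then l2 else lS end.
Proof. by rewrite /lam isrep_rep keyK. Qed.

Lemma lam_nrep y : ~~ isrep y -> lam y = if key y is Some _ then dS else dB.
Proof. by rewrite /lam => /negbTE ->. Qed.

Lemma sum_cnt_some (F : 'I_m -> R) :
  \sum_i (cnt (Some i))%:R * F i = Nr * \sum_i F i.
Proof. by rewrite mulr_sumr. Qed.

Lemma sum_some_eq (i : 'I_m) : \sum_(j < m) (Some j == Some i)%:R = 1 :> R.
Proof.
rewrite (eq_bigr (fun j => (j == i)%:R * 1)); first by rewrite sum_ind.
by move=> j _; rewrite mulr1.
Qed.

Lemma eqSome (a b : 'I_m) : (Some a == Some b) = (a == b).
Proof. by apply/eqP/eqP => [[]|->]. Qed.

Lemma rep_inj : injective rep.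
Proof. exact: (can_inj keyK). Qed.

Lemma AP x y : \sum_z Af x z * Pf z y = \sum_z Pf x z * Tf z y.
Proof.
rewrite sumAP sumPT trR.
have [ry | nry] := boolP (isrep y).
  move: ry; rewrite /isrep => /eqP ->; move: (key y) => k.
  rewrite !Pf_rep lam_rep.
  rewrite (eq_bigr (fun z => colF k (key z))); last by move=> z _; rewrite Pf_rep.
  rewrite (eq_bigr (fun z => colF k (key z)) (P := fun z => key z == key x)); last by move=> z _; rewrite Pf_rep.
  rewrite (sum_key (colF k)) (sum_keyk (key x) (colF k)) sum_opt sum_cnt_some.
  rewrite /rb /r0 !cntR /Mr /Nr.
  case: k => [i|] /=.
    have [-> | nii] := eqVneq i i0.
      rewrite eqxx big1 ?mulr0 ?addr0 //.
      rewrite /l2 /Mr /Nr.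
      case: (key x) => [j|] /=; rewrite ?mulr0 ?mulr1 ?mul0r ?mul1r ?addr0; first by lra.
      have h := congr1 (fun z => n%:R * z) hsum; simpl in h; lra.
    rewrite subrr mulr0 add0r sumrB !sum_some_eq subrr mulr0 addr0.
    rewrite (inj_eq rep_inj) eqSome (negbTE nii) addr0 /lS /Mr /Nr.
    case: (key x) => [j|] /=; last by lra.
    have [-> | nji] := eqVneq j i; first by rewrite !eqSome eqxx (negbTE nii) /=; lra.
    have [-> | nji0] := eqVneq j i0; first by rewrite !eqSome eqxx eq_sym (negbTE nii) /=; lra.
    rewrite !eqSome (negbTE nji) (negbTE nji0) /=; lra.
  rewrite (inj_eq rep_inj) /= addr0 sumr_const card_ord /l1 /Mr /Nr.
  case: (key x) => [j|] /=; first by lra.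
  have h := congr1 (fun z => n%:R * z) hq1; simpl in h; lra.
have yr0 : (y == r0) = false.
  by apply: contraNF nry => /eqP ->; rewrite isrep_rep.
rewrite yr0 addr0 lam_nrep //.
rewrite (eq_bigr (fun z => (z == y)%:R - (z == rep (key y))%:R)); last by move=> z _; rewrite Pf_nrep.
rewrite (eq_bigr (fun z => (z == y)%:R - (z == rep (key y))%:R) (P := fun z => key z == key x)); last by move=> z _; rewrite Pf_nrep.
rewrite !sumrB !sum_eq (sum_eqP (fun z => key z == key x)) (sum_eqP (fun z => key z == key x)).
rewrite keyK !subrr !addr0 Pf_nrep //.
move: nry; rewrite /isrep => nry.
have [-> | xy] := eqVneq x y.
  rewrite (negbTE nry) /dS /dB /Mr /Nr !cntR; case: (key y) => [j|] /=; lra.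
have [-> | xr] := eqVneq x (rep (key y)).
  rewrite keyK /dS /dB /Mr /Nr !cntR; case: (key y) => [j|] /=; lra.
by rewrite subrr mulr0 mul0r.
Qed.


Lemma Nr_neq0 : Nr != 0.
Proof. by rewrite /Nr pnatr_eq0 -lt0n. Qed.

Lemma Mr1_neq0 : Mr - 1 != 0.
Proof.
rewrite /Mr -(natrB _ (ltnW (ltnW m2))) pnatr_eq0 subn_eq0 -ltnNge.
exact: (ltn_trans _ m2).
Qed.

Lemma mulfK0 {a b : R} : a * b = 0 -> a != 0 -> b = 0.
Proof. by move=> /[swap] a0 /eqP; rewrite mulf_eq0 (negbTE a0) /= => /eqP. Qed.

Lemma kerP (h : V -> R) : (forall y, \sum_x h x * Pf x y = 0) -> forall x, h x = 0.
Proof.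
move=> H.
have Hc : forall x, h x = h (rep (key x)).
  move=> x; have [rx|nrx] := boolP (isrep x); first by rewrite {1}(eqP rx).
  have := H x; rewrite (eq_bigr (fun z => (z == x)%:R * h z - (z == rep (key x))%:R * h z)).
    by rewrite sumrB !sum_ind => /eqP; rewrite subr_eq0 => /eqP.
  by move=> z _; rewrite Pf_nrep // mulrC mulrBl.
pose H' k := h (rep k).
have E k : \sum_k' (cnt k')%:R * (H' k' * colF k k') = 0.
  rewrite -(sum_key (fun k' => H' k' * colF k k')) -[RHS](H (rep k)).
  by apply: eq_bigr => z _; rewrite Pf_rep Hc.
have EN : H' None = 0.
  have := E (Some i0); rewrite sum_opt sum_cnt_some /= eqxx /=.
  rewrite big1 ?mulr0 ?addr0 ?mulr1 => [|i _]; last by rewrite /= mulr0.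
  rewrite -/(cnt None) cntR => eq0; apply: (mulfK0 eq0).
  by rewrite mulf_eq0 negb_or Mr1_neq0 Nr_neq0.
have ES i : H' (Some i) = H' (Some i0).
  have [-> // | nii] := eqVneq i i0.
  have := E (Some i); rewrite sum_opt sum_cnt_some /= (negbTE nii) /= subrr !mulr0 add0r.
  rewrite (eq_bigr (fun j => (j == i)%:R * H' (Some j) - (j == i0)%:R * H' (Some j))).
    rewrite sumrB !sum_ind => /mulfK0 /(_ Nr_neq0) /eqP; rewrite subr_eq0 => /eqP //.
  by move=> j _; rewrite !eqSome mulrC mulrBl.
have ES0 : H' (Some i0) = 0.
  have := E None; rewrite sum_opt sum_cnt_some /= EN mul0r mulr0 add0r.
  rewrite (eq_bigr (fun _ => H' (Some i0))); last by move=> j _; rewrite ES mulr1.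
  rewrite sumr_const card_ord -mulr_natl mulrA => eq0; apply: (mulfK0 eq0).
  rewrite mulf_eq0 negb_or Nr_neq0 /= pnatr_eq0 -lt0n.
  exact: (ltn_trans _ m2).
move=> x; rewrite Hc; case: (key x) => [i|]; last exact: EN.
by rewrite -/(H' _) ES.
Qed.


Definition mxV (F : V -> V -> R) : 'M[R]_#|{: V}| :=
  \matrix_(i, j) F (enum_val i) (enum_val j).

Lemma sumV (F : V -> R) : \sum_(i < #|{: V}|) F (enum_val i) = \sum_v F v.
Proof. by rewrite -(big_enum_val F); apply: eq_bigl => v; rewrite inE. Qed.

Lemma mulmxV F G : mxV F *m mxV G = mxV (fun x y => \sum_z F x z * G z y).
Proof.
apply/matrixP => i j; rewrite !mxE.
rewrite -(sumV (fun z => F (enum_val i) z * G z (enum_val j))).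
by apply: eq_bigr => k _; rewrite !mxE.
Qed.

Lemma detP : \det (mxV Pf) != 0.
Proof.
apply/negP => /det0P [v nv0 vP].
have H0 := kerP (fun x => v 0 (enum_rank x)).
have : v = 0.
  apply/rowP => j; rewrite mxE -{1}(enum_valK j); apply: H0 => y.
  transitivity ((v *m mxV Pf) 0 (enum_rank y)); last by rewrite vP mxE.
  have := sumV (fun x => v 0 (enum_rank x) * Pf x y); rewrite /= => <-.
  by rewrite mxE; apply: eq_bigr => i _; rewrite !mxE enum_valK enum_rankK.
by move/eqP: nv0.
Qed.

Lemma APm : mxV Af *m mxV Pf = mxV Pf *m mxV Tf.
Proof. by rewrite !mulmxV; apply/matrixP => i j; rewrite !mxE AP. Qed.


Lemma prodV (F : V -> {poly R}) : \prod_(i < #|{: V}|) F (enum_val i) = \prod_v F v.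
Proof. by rewrite -(big_enum_val F); apply: eq_bigl => v; rewrite inE. Qed.

Lemma prod_opt (F : option 'I_m -> {poly R}) : \prod_k F k = F None * \prod_i F (Some i).
Proof.
rewrite (bigD1 None) //=; congr (_ * _).
rewrite (reindex_onto Some (odflt i0)) /=; last by move=> [j|].
by apply: eq_bigl => i /=; rewrite eqxx.
Qed.

Lemma prod_const_pred (P : pred V) (c : {poly R}) : \prod_(z | P z) c = c ^+ #|P|.
Proof. by rewrite prodr_const. Qed.

Lemma charT : char_poly (mxV Tf) = \prod_v ('X - (lam v)%:P).
Proof.
rewrite /char_poly (@det_diag1 _ _ _ (enum_rank rb) (enum_rank r0)).
- rewrite -(prodV (fun v => 'X - (lam v)%:P)); apply: eq_bigr => i _.
  by rewrite !mxE /Tf !eqxx mulr1n.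
- by rewrite (can_eq enum_rankK) rb_r0.
move=> i j ij H; rewrite !mxE (negbTE ij) mulr0n sub0r /Tf.
rewrite (can_eq enum_valK) (negbTE ij).
case: ifP => [/andP [/eqP ei /eqP ej] | _]; last by rewrite oppr0.
by move: H; rewrite -ei -ej !enum_valK !eqxx.
Qed.

Lemma card_rep : #|[pred v | isrep v]| = m.+1.
Proof.
have -> : #|[pred v | isrep v]| = #|[set rep k | k : option 'I_m]|.
  apply: eq_card => v; rewrite inE; apply/idP/imsetP => [/eqP -> | [k _ ->]].
    by exists (key v).
  exact: isrep_rep.
by rewrite card_imset ?card_option ?card_ord //; exact: rep_inj.
Qed.

Lemma cardV_nat : #|V| = ((2 * m - 1) * n)%N.
Proof.
apply/eqP; rewrite -(eqr_nat R) cardVR natrM natrB ?natrM //.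
by lia.
Qed.

Lemma card_nrN : #|[pred v | ~~ isrep v && (key v == None)]| = ((m - 1) * n - 1)%N.
Proof.
rewrite -[((m - 1) * n)%N]/(cnt None) -hcnt [#|[pred v | key v == None]|](cardD1 rb).
rewrite inE /rb keyK eqxx /= add1n subn1 /=.
apply: eq_card => v; rewrite !inE /isrep.
by case E: (key v == None); rewrite ?andbF ?andbT // (eqP E).
Qed.

Lemma card_nrS : #|[pred v | ~~ isrep v && (key v != None)]| = (m * (n - 1))%N.
Proof.
have h1 := cardC [pred v | isrep v].
have h2 := cardID [pred v | key v == None] [predC [pred v | isrep v]].
have e1 : #|[predI [predC [pred v | isrep v]] & [pred v | key v == None]]| =
          #|[pred v | ~~ isrep v && (key v == None)]| by apply: eq_card => v; rewrite !inE.
have e2 : #|[predD [predC [pred v | isrep v]] & [pred v | key v == None]]| =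
          #|[pred v | ~~ isrep v && (key v != None)]| by apply: eq_card => v; rewrite !inE andbC.
rewrite e1 e2 card_nrN in h2; rewrite card_rep cardV_nat -h2 in h1.
move: h1; rewrite -/(predC _); move: #|[pred v | ~~ isrep v && (key v != None)]| => X.
have : (1 <= (m - 1) * n)%N by rewrite muln_gt0 n1 andbT subn_gt0; lia.
nia.
Qed.


Lemma prodLam : \prod_v ('X - (lam v)%:P) =
  ('X - dS%:P) ^+ (m * (n - 1)) * ('X - lS%:P) ^+ (m - 1)
  * ('X - dB%:P) ^+ ((m - 1) * n - 1) * ('X - l1%:P) * ('X - l2%:P).
Proof.
rewrite (bigID isrep) /=.
rewrite (reindex_onto rep key); last by move=> v /eqP <-.
rewrite (eq_bigl predT); last by move=> k; rewrite isrep_rep keyK eqxx.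
rewrite prod_opt (bigD1 i0) //=.
rewrite (eq_bigr (fun _ => 'X - lS%:P)); last by move=> i ni; rewrite lam_rep (negbTE ni).
rewrite prodr_const cardC1 card_ord /= !lam_rep eqxx.
rewrite (bigID (fun v => key v == None)) /=.
rewrite (eq_bigr (fun _ => 'X - dB%:P) (P := fun i => ~~ isrep i && (key i == None))); last first.
  by move=> v /andP [nr /eqP kv]; rewrite lam_nrep // kv.
rewrite (eq_bigr (fun _ => 'X - dS%:P) (P := fun i => ~~ isrep i && (key i != None))); last first.
  by move=> v /andP [nr kv]; rewrite lam_nrep //; move: kv; case: (key v).
rewrite (prod_const_pred (fun v => ~~ isrep v && (key v == None))).
rewrite (prod_const_pred (fun v => ~~ isrep v && (key v != None))).
have -> : #|(fun v => ~~ isrep v && (key v == None))| = ((m - 1) * n - 1)%N.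
  by rewrite -card_nrN; apply: eq_card.
have -> : #|(fun v => ~~ isrep v && (key v != None))| = (m * (n - 1))%N.
  by rewrite -card_nrS; apply: eq_card.
rewrite -subn1; ring.
Qed.

Theorem abs_main : char_poly (mxV Af) =
  ('X - dS%:P) ^+ (m * (n - 1)) * ('X - lS%:P) ^+ (m - 1)
  * ('X - dB%:P) ^+ ((m - 1) * n - 1) * ('X - l1%:P) * ('X - l2%:P).
Proof. by rewrite (@char_poly_sim _ _ _ _ _ APm detP) charT prodLam. Qed.

End Abs.

Section Grp.
Local Open Scope group_scope.
Variables (gT : finGroupType) (G : {group gT}) (a b : gT) (m n : nat).
Hypotheses (modd : odd m) (m2 : (2 < m)%N) (n1 : (1 <= n)%N).
Hypotheses (hG : G :=: <<[set a; b]>>) (hcard : #|G| = (2 * m * n)%N).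
Hypotheses (ham : a ^+ m = 1) (hbn : b ^+ (2 * n) = 1) (hrel : b * a * b^-1 = a^-1).

Lemma aG : a \in G. Proof. by rewrite hG mem_gen // set21. Qed.
Lemma bG : b \in G. Proof. by rewrite hG mem_gen // set22. Qed.

Lemma bNa : b \in 'N(<[a]>).
Proof.
rewrite -[b]invgK groupV; apply/normP.
by rewrite -cycleJ conjgE invgK mulgA hrel cycleV.
Qed.

Lemma orders : [/\ #[a] = m, #[b] = (2 * n)%N & #|<[a]> :&: <[b]>| = 1%N].
Proof.
have sub : G \subset <[a]> * <[b]>.
  rewrite -norm_joinEr ?cycle_subG ?bNa // hG gen_subG.
  apply/subsetP => x; rewrite !inE => /orP [/eqP-> | /eqP->].
    by apply: (subsetP (joing_subl _ _)); exact: cycle_id.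
  by apply: (subsetP (joing_subr _ _)); exact: cycle_id.
have c1 := subset_leq_card sub.
have c2 := mul_cardG <[a]>%G <[b]>%G.
have c3 : (#[a] <= m)%N by apply: dvdn_leq; [lia | rewrite order_dvdn ham].
have c4 : (#[b] <= 2 * n)%N by apply: dvdn_leq; [lia | rewrite order_dvdn hbn].
have c5 := cardG_gt0 (<[a]> :&: <[b]>)%G.
have c6 := cardG_gt0 <[a]>%G.
have c7 := cardG_gt0 <[b]>%G.
rewrite hcard in c1.
move: c1 c2 c3 c4 c5 c6 c7 => /=.
move: #|<[a]> * <[b]>| #|<[a]> :&: <[b]>| => P I.
rewrite /order.
move: #|<[a]>| #|<[b]>| => oa ob.
move=> c1 c2 c3 c4 c5 c6 c7.
have : (oa * ob <= 2 * m * n)%N by nia.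
have : (2 * m * n <= P * I)%N by nia.
move=> h1 h2; split; nia.
Qed.


Lemma oa : #[a] = m. Proof. by case: orders. Qed.
Lemma ob : #[b] = (2 * n)%N. Proof. by case: orders. Qed.
Lemma triv z : z \in <[a]> -> z \in <[b]> -> z = 1.
Proof.
move=> za zb; case: orders => _ _ /eqP; rewrite -trivg_card1 => /eqP h.
by have := in_setI z <[a]> <[b]>; rewrite za zb h inE => /eqP.
Qed.

Lemma a_odd z : z \in <[a]> -> (z * z == 1) = (z == 1).
Proof.
move=> za; apply/eqP/eqP => [zz | ->]; last by rewrite mulg1.
have h2 : (#[z] %| 2)%N by rewrite order_dvdn expg2 zz.
have hm : (#[z] %| m)%N by rewrite -oa; exact: order_dvdG.
have : (#[z] %| gcdn 2 m)%N by rewrite dvdn_gcd h2.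
have /eqP -> : gcdn 2 m == 1%N by rewrite -/(coprime 2 m) coprime2n.
by rewrite dvdn1 order_eq1 => /eqP.
Qed.

Lemma conjb k : (a ^+ k) ^ (b^-1) = (a ^+ k)^-1.
Proof.
rewrite conjXg; have -> : a ^ b^-1 = a^-1 by rewrite conjgE invgK mulgA hrel.
by rewrite expVgn.
Qed.

Lemma conjbj j k : (a ^+ k) ^ (b^-1 ^+ j) = if odd j then (a ^+ k)^-1 else a ^+ k.
Proof.
elim: j => [|j IH]; first by rewrite expg0 conjg1.
rewrite expgSr conjgM IH /=; case: (odd j) => /=; last by rewrite conjb.
by rewrite conjVg conjb invgK.
Qed.

Lemma swap j k : b ^+ j * a ^+ k = (if odd j then (a ^+ k)^-1 else a ^+ k) * b ^+ j.
Proof. by rewrite conjgCV -expVgn conjbj. Qed.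

Lemma m_gt0 : (0 < m)%N. Proof. lia. Qed.
Lemma m_gt1 : (1 < m)%N. Proof. lia. Qed.
Lemma n2_gt0 : (0 < 2 * n)%N. Proof. lia. Qed.
Lemma n2_gt1 : (1 < 2 * n)%N. Proof. lia. Qed.

Definition W := ('I_m * 'I_(2 * n))%type.
Definition f (w : W) : gT := a ^+ w.1 * b ^+ w.2.
Definition w0 : W := (Ordinal m_gt0, Ordinal n2_gt0).

Lemma fG w : f w \in G.
Proof. by rewrite groupM ?groupX ?aG ?bG. Qed.

Lemma aeq (i k : 'I_m) : (a ^+ i == a ^+ k) = (i == k).
Proof. by rewrite eq_expg_mod_order oa !modn_small. Qed.

Lemma beq (i k : 'I_(2 * n)) : (b ^+ i == b ^+ k) = (i == k).
Proof. by rewrite eq_expg_mod_order ob !modn_small. Qed.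

Lemma a1 (i : 'I_m) : (a ^+ i == 1) = (val i == 0%N).
Proof.
rewrite -order_dvdn oa; case: i => -[|i] Hi /=; first by rewrite dvdn0.
by apply/negbTE; apply: contraL Hi => /dvdn_leq; rewrite -ltnNge; apply.
Qed.

Lemma f_inj : injective f.
Proof.
move=> [i j] [k l]; rewrite /f /= => e.
have e1 : (a ^+ k)^-1 * a ^+ i = b ^+ l * (b ^+ j)^-1.
  have := congr1 (fun g => (a ^+ k)^-1 * g * (b ^+ j)^-1) e.
  by rewrite /= !mulgA mulgK -(mulgA _ (a ^+ k)) mulKg.
have za : (a ^+ k)^-1 * a ^+ i \in <[a]> by rewrite groupM ?groupV ?mem_cycle.
have zb : (a ^+ k)^-1 * a ^+ i \in <[b]> by rewrite e1 groupM ?groupV ?mem_cycle.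
have z1 := triv _ za zb.
have z2 : b ^+ l * (b ^+ j)^-1 = 1 by rewrite -e1.
move/mulg1_eq/eqP: z1; rewrite invgK aeq => /eqP ->.
by move/mulg1_eq/eqP: z2; rewrite eqg_inv beq => /eqP ->.
Qed.


Lemma f_im : f @: setT = G.
Proof.
apply/eqP; rewrite eqEcard; apply/andP; split.
  by apply/subsetP => x /imsetP [w _ ->]; exact: fG.
rewrite card_imset ?cardsT ?card_prod ?card_ord ?hcard ?mulnA; [lia | exact: f_inj].
Qed.

Definition cw (g : gT) : W := odflt w0 [pick w | f w == g].

Lemma cwK g : g \in G -> f (cw g) = g.
Proof.
rewrite /cw; case: pickP => [w /eqP // | none].
by rewrite -f_im => /imsetP [w _ e]; move: (none w); rewrite e eqxx.
Qed.

Lemma fK w : cw (f w) = w.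
Proof. by apply: f_inj; rewrite cwK ?fG. Qed.

Lemma comm_f (i k : 'I_m) (j l : 'I_(2 * n)) :
  (f (i, j) * f (k, l) == f (k, l) * f (i, j)) =
  (if odd j then (if odd l then i == k else val k == 0%N)
   else (if odd l then val i == 0%N else true)).
Proof.
rewrite /f /=.
have E : forall (i k : 'I_m) (j l : 'I_(2 * n)),
  a ^+ i * b ^+ j * (a ^+ k * b ^+ l) =
  a ^+ i * (if odd j then (a ^+ k)^-1 else a ^+ k) * b ^+ (j + l).
  move=> i' k' j' l'.
  by rewrite mulgA -(mulgA _ (b ^+ j')) swap !mulgA expgnDr mulgA.
rewrite !E addnC (inj_eq (mulIg _)).
have cik : commute (a ^+ i) (a ^+ k) by apply: commuteX2.
case: (odd j); case: (odd l) => /=.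
- rewrite eq_mulgV1 invMg !invgK a_odd; last by rewrite groupM ?groupV ?mem_cycle.
  by rewrite -eq_mulgV1 aeq.
- rewrite -cik (inj_eq (mulgI _)) eqg_invLR eq_mulgV1 invgK a_odd ?mem_cycle //.
  exact: a1.
- rewrite cik (inj_eq (mulgI _)) eq_mulgV1 invgK a_odd ?mem_cycle //.
  exact: a1.
by rewrite cik eqxx.
Qed.


Lemma cent_f w : (f w \in 'Z(G)) = (val w.1 == 0%N) && ~~ odd w.2.
Proof.
case: w => i j /=.
apply/centerP/idP => [[_ cz] | /andP [i0 je]].
  have c1 := cz _ (fG (Ordinal m_gt1, Ordinal n2_gt0)).
  have c2 := cz _ (fG (Ordinal m_gt0, Ordinal n2_gt1)).
  move: c1 c2; rewrite /commute => /eqP c1 /eqP c2.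
  rewrite comm_f /= in c1; rewrite comm_f /= in c2.
  by move: c1 c2; case: (odd j) => //= _ ->.
split; first exact: fG.
move=> y yG; rewrite -(cwK _ yG); case: (cw y) => k l.
by apply/eqP; rewrite comm_f (negbTE je) i0; case: (odd l).
Qed.

Definition noncentral (w : W) := ~~ ((val w.1 == 0%N) && ~~ odd w.2).

Lemma fV w : (f w \in G :\: 'Z(G)) = noncentral w.
Proof. by rewrite inE cent_f fG andbT. Qed.

Definition V := ncg_vertex G.

Lemma valG (v : V) : val v \in G.
Proof. by have := valP v; rewrite inE => /andP []. Qed.

Definition kind (w : W) : option 'I_m := if odd w.2 then Some w.1 else None.
Definition key (v : V) : option 'I_m := kind (cw (val v)).
Definition wk (k : option 'I_m) : W :=
  match k with None => (Ordinal m_gt1, Ordinal n2_gt0) | Some i => (i, Ordinal n2_gt1) end.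

Lemma wk_nc k : noncentral (wk k).
Proof. by case: k => [i|]; rewrite /noncentral /= ?andbF. Qed.

Definition v0 : V := exist _ (f (wk None)) (etrans (fV _) (wk_nc None)).
Definition rep (k : option 'I_m) : V := insubd v0 (f (wk k)).

Lemma val_rep k : val (rep k) = f (wk k).
Proof. by rewrite /rep insubdK // -topredE /= fV wk_nc. Qed.

Lemma keyK k : key (rep k) = k.
Proof. by rewrite /key val_rep fK; case: k. Qed.

Lemma eqSome' (x y : 'I_m) : (Some x == Some y) = (x == y).
Proof. by apply/eqP/eqP => [[]|->]. Qed.

Lemma commV (u v : V) : (val u * val v == val v * val u) = (key u == key v).
Proof.
have Hu := cwK _ (valG u); have Hv := cwK _ (valG v).
have Nu : noncentral (cw (val u)) by rewrite -fV Hu (valP u).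
have Nv : noncentral (cw (val v)) by rewrite -fV Hv (valP v).
rewrite /key; move: (cw (val u)) (cw (val v)) Hu Hv Nu Nv => [i j] [k l] <- <-.
rewrite comm_f /noncentral /kind /=.
case: (odd j); case: (odd l); rewrite /= ?andbT //.
all: try by move=> _ /negbTE ->.
all: try by move=> /negbTE ->.
Qed.


Lemma sum_odd k : (\sum_(j < 2 * k) odd j)%N = k.
Proof.
rewrite -(big_mkord xpredT (fun j => nat_of_bool (odd j))).
elim: k => [|k IH]; first by rewrite big_geq.
rewrite mulnS add2n !big_nat_recr //= IH mul2n odd_double /=; lia.
Qed.

Lemma card_odd : #|[set j : 'I_(2 * n) | odd j]| = n.
Proof.
rewrite -sum1_card big_mkcond /= -[RHS](sum_odd n); apply: eq_bigr => j _.
by rewrite inE; case: (odd j).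
Qed.

Lemma card_even : #|[set j : 'I_(2 * n) | ~~ odd j]| = n.
Proof.
have := cardsC [set j : 'I_(2 * n) | odd j].
rewrite card_odd card_ord.
have -> : ~: [set j : 'I_(2 * n) | odd j] = [set j : 'I_(2 * n) | ~~ odd j].
  by apply/setP => j; rewrite !inE.
lia.
Qed.

Lemma card_nz : #|[set i : 'I_m | val i != 0%N]| = (m - 1)%N.
Proof.
have -> : [set i : 'I_m | val i != 0%N] = [set~ Ordinal m_gt0].
  by apply/setP => i; rewrite !inE -val_eqE.
by rewrite cardsC1 card_ord subn1.
Qed.

Lemma ginj : injective (fun v : V => cw (val v)).
Proof.
move=> u v e; apply: val_inj.
by rewrite -(cwK _ (valG u)) -(cwK _ (valG v)) e.
Qed.

Lemma hcnt k : #|[pred v : V | key v == k]| = cnt m n k.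
Proof.
have -> : #|[pred v : V | key v == k]| =
          #|[set cw (val v) | v in [set v : V | key v == k]]|.
  by rewrite card_imset; [apply: eq_card => v; rewrite !inE | exact: ginj].
have -> : [set cw (val v) | v in [set v : V | key v == k]] =
          [set w | noncentral w && (kind w == k)].
  apply/setP => w; rewrite inE; apply/imsetP/idP => [[v] | /andP [nw kw]].
    rewrite inE => kv ->; rewrite kv andbT.
    by rewrite -fV (cwK _ (valG v)) (valP v).
  exists (insubd v0 (f w)); last by rewrite insubdK ?fK // -topredE /= fV.
  by rewrite inE /key insubdK ?fK // -topredE /= fV.
case: k => [i|] /=.
  have -> : [set w | noncentral w && (kind w == Some i)] =
            setX [set i] [set j : 'I_(2 * n) | odd j].
    apply/setP => -[x y]; rewrite !inE /noncentral /kind /=.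
    by case: (odd y); rewrite /= ?andbF //= eqSome' andbC.
  by rewrite cardsX cards1 card_odd mul1n.
have -> : [set w | noncentral w && (kind w == None)] =
          setX [set i : 'I_m | val i != 0%N] [set j : 'I_(2 * n) | ~~ odd j].
  apply/setP => -[x y]; rewrite !inE /noncentral /kind /=.
  by case: (odd y); rewrite /= ?andbF ?andbT.
by rewrite cardsX card_nz card_even.
Qed.

Lemma distV (hV : (3 <= #|{: V}|)%N) (u v : V) : ncg_dist u v = dn V m key u v.
Proof.
rewrite /ncg_dist; move: hV; case: #|{: V}| => [|[|[|N]]] // _.
rewrite /= /dn.
have adjE : forall x y : V, ncg_adj x y = (x != y) && (key x != key y).
  by move=> x y; rewrite /ncg_adj commV.
have [e | nuv] := eqVneq u v; first by [].
have w1 : [exists w, ncg_adj u w && (w == v)] = (key u != key v).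
  apply/existsP/idP => [[w /andP [h /eqP wv]] | h].
    by move: h; rewrite adjE wv => /andP [].
  by exists v; rewrite adjE h nuv /=; apply: eqxx.
rewrite w1; have [ek | nk] := eqVneq (key u) (key v); last by [].
rewrite /=.
have -> : [exists w, ncg_adj u w && [exists w', ncg_adj w w' && (w' == v)]].
  pose k' := if key u is None then Some (Ordinal m_gt0) else None.
  have nk' : key u != k' by rewrite /k'; case: (key u).
  apply/existsP; exists (rep k').
  rewrite adjE keyK eq_sym nk' andbT.
  apply/andP; split.
    by apply: contra nk' => /eqP /(congr1 key); rewrite keyK => e; apply/eqP; congruence.
  apply/existsP; exists v; rewrite adjE keyK -ek [k' == _]eq_sym nk' andbT.
  apply/andP; split; last by apply: eqxx.
  by apply: contra nk' => /eqP /(congr1 key); rewrite keyK => e; apply/eqP; congruence.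
by [].
Qed.

End Grp.

Theorem theorem6p5 (R : rcfType) (gT : finGroupType) (G : {group gT})
  (a b : gT) (m n : nat) (t1 t2 : R) :
  odd m -> (2 < m)%N -> (1 <= n)%N ->
  (* G = M_{2mn} = < a, b | a^m = b^{2n} = 1, b a b^-1 = a^-1 >, of order 2mn *)
  G :=: <<[set a; b]>>%g -> #|G| = (2 * m * n)%N ->
  (a ^+ m = 1)%g -> (b ^+ (2 * n) = 1)%g -> (b * a * b^-1 = a^-1)%g ->
  (* t1, t2 are the two roots of (m-1)x^2 - (2m-5)x - m = 0 *)
  (m - 1)%:R *: (('X - t1%:P) * ('X - t2%:P))
    = (m - 1)%:R *: 'X^2 - (2 * m - 5)%:R *: 'X - (m%:R)%:P ->
  char_poly (ncg_DQ G R) =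
    ('X - (2 * m * n - 4)%:R%:P) ^+ (m * (n - 1))
  * ('X - (((2 * m + 1) * n - 4)%:R)%:P) ^+ (m - 1)
  * ('X - (((3 * m - 2) * n - 4)%:R)%:P) ^+ ((m - 1) * n - 1)
  * ('X - (n%:R * t1 * (m - 1)%:R + (3 * m * n + n - 4)%:R)%:P)
  * ('X - (n%:R * t2 * (m - 1)%:R + (3 * m * n + n - 4)%:R)%:P).
Proof.
move=> modd m2 n1 hG hcard ham hbn hrel hpoly.
have m0 : (0 < m)%N by lia.
pose i0 : 'I_m := Ordinal m0.
pose ky := key gT G a b m n modd m2 n1 hcard.
pose rp := rep gT G a b m n modd m2 n1 hG hcard ham hbn hrel.
have kK : forall k, ky (rp k) = k := keyK gT G a b m n modd m2 n1 hG hcard ham hbn hrel.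
have hc : forall k, #|[pred v | ky v == k]| = cnt m n k :=
  hcnt gT G a b m n modd m2 n1 hG hcard ham hbn hrel.
have hV : (3 <= #|{: V gT G}|)%N.
  by rewrite (cardV_nat R _ m n i0 ky hc m2 n1); nia.
have e4 : (m - 1)%:R = m%:R - 1 :> R by rewrite natrB //; lia.
have e6 : (2 * m - 5)%:R = 2 * m%:R - 5 :> R by rewrite natrB ?natrM //; lia.
have hq1 : (m%:R - 1) * t1 ^+ 2 - (2 * m%:R - 5) * t1 - m%:R = 0 :> R.
  move: (congr1 (fun p => p.[t1]) hpoly); rewrite /= hornerZ hornerM !hornerXsubC !hornerD !hornerN !hornerZ hornerXn hornerX hornerC e4 e6 subrr mul0r mulr0 => h.
  lra.
have hsum : (m%:R - 1) * (t1 + t2) = 2 * m%:R - 5 :> R.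
  have E : ('X - t1%:P) * ('X - t2%:P) = 'X^2 - (t1 + t2) *: 'X + (t1 * t2)%:P.
    by rewrite -mul_polyC polyCD polyCM; ring.
  move: (congr1 (fun p : {poly R} => p`_1) hpoly); rewrite /= E !coefE /= e4 e6.
  lra.
have dE : forall u v, ncg_dist u v = dn (V gT G) m ky u v :=
  distV gT G a b m n modd m2 n1 hG hcard ham hbn hrel hV.
have -> : ncg_DQ G R = mxV R (V gT G) (Af R (V gT G) m ky).
  apply/matrixP => i j; rewrite !mxE /Af /ncg_trans /trn dE (inj_eq enum_val_inj).
  by congr (_ * _%:R + _); apply: eq_bigr => u _; rewrite dE.
rewrite (abs_main R (V gT G) m n i0 ky rp kK hc m2 n1 t1 t2 hq1 hsum).
rewrite /dS /lS /dB /l1 /l2 /Mr /Nr.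
have e1 : (2 * m * n - 4)%:R = 2 * m%:R * n%:R - 4 :> R.
  by rewrite natrB ?natrM //; nia.
have e2 : ((2 * m + 1) * n - 4)%:R = (2 * m%:R + 1) * n%:R - 4 :> R.
  by rewrite natrB; [rewrite !(natrM, natrD) | nia].
have e3 : ((3 * m - 2) * n - 4)%:R = (3 * m%:R - 2) * n%:R - 4 :> R.
  rewrite natrB; last nia.
  by rewrite natrM natrB ?natrM //; lia.
have e5 : (3 * m * n + n - 4)%:R = 3 * m%:R * n%:R + n%:R - 4 :> R.
  by rewrite natrB; [rewrite !(natrM, natrD) | nia].
by rewrite e1 e2 e3 e4 e5.
Qed.
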